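(* Let $n\geq 2$, $m\geq 1$, $r\geq 2$ be integers and let $\alpha$ be an integer with $1\leq\alpha<(m+1)^n$. Then $\Gamma_n^{\alpha,r}$ is homotopy equivalent to the induced subcomplex of $\Gamma_n^{\alpha,r}$ on the vertex set $\{x\in V(\Gamma_n^{\alpha,r}) : |x_i|\leq\lfloor r/2\rfloor \text{ for all } 1\leq i\leq n\}$.
   Context: $\mathbb{Z}^n$ carries the Manhattan metric $d(x,y)=\sum_i|x_i-y_i|$; for $X\subseteq\mathbb{Z}^n$, $\mathrm{VR}(X;r)$ is the simplicial complex on $X$ whose simplices are finite subsets of diameter at most $r$. Let $\prec$ be the anti-lexicographic order on $\mathbb{Z}^n$: $x\prec y$ iff at the largest index $i$ with $x_i\neq y_i$ one has $x_i<y_i$. Let $V_m=\{0,\ldots,m\}^n$. Let $H$ be $V_m$ with its first $\alpha$ elements (with respect to $\prec$) removed, $\delta$ the $\prec$-least element of $H$, and $Y=\{x-\delta: x\in H\}$ (so $\mathbf{0}=(0,\ldots,0)$ is the least element of $Y$). Then $\Gamma_n^{\alpha,r}$ is the link of $\mathbf{0}$ in $\mathrm{VR}(Y;r)$, i.e. the complex of simplices $\tau$ of $\mathrm{VR}(Y;r)$ with $\mathbf{0}\notin\tau$ and $\tau\cup\{\mathbf{0}\}\in\mathrm{VR}(Y;r)$. For a simplicial complex $K$ and a set $W$ of vertices, the induced subcomplex on $W$ consists of the simplices of $K$ contained in $W$. *)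

(* Defs.v *)
From HB Require Import structures.
From mathcomp Require Import all_boot all_order all_algebra.
From mathcomp Require Import all_classical all_reals all_analysis.
Set Implicit Arguments. Unset Strict Implicit. Unset Printing Implicit Defensive.
Import Order.TTheory GRing.Theory Num.Theory.
Import numFieldTopology.Exports numFieldNormedType.Exports.
Local Open Scope classical_set_scope.
Local Open Scope ring_scope.

Definition homotopic_on {R : realType} {X : topologicalType}
  (A : set X) (h1 h2 : X -> X) : Prop :=
  exists H : R * X -> X,
    {within (`[0%R, 1%R] `*` A)%classic, continuous H} /\
    (forall x, A x -> H (0%R, x) = h1 x /\ H (1%R, x) = h2 x) /\
    (H @` (`[0%R, 1%R] `*` A) `<=` A)%classic.

Definition homotopy_equivalent (R : realType) {X Y : topologicalType}
  (A : set X) (B : set Y) : Prop :=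
  exists (f : X -> Y) (g : Y -> X),
    {within A, continuous f} /\ {within B, continuous g} /\
    (f @` A `<=` B)%classic /\ (g @` B `<=` A)%classic /\
    @homotopic_on R X A (g \o f) id /\ @homotopic_on R Y B (f \o g) id.

(* A simplicial complex on a finite vertex type T is given by its
   predicate of simplices K : pred {set T} (downward closed). *)
Definition realization (R : realType) (T : finType) (K : pred {set T})
  : set 'rV[R]_#|T| :=
  [set p : 'rV[R]_#|T| | (forall i, 0 <= p ord0 i) /\ \sum_i p ord0 i = 1 /\
           K (finset (fun x : T => p ord0 (enum_rank x) != 0))].

Definition induced_subcomplex (T : finType) (K : pred {set T}) (W : {set T})
  : pred {set T} := fun s => K s && (s \subset W).

Definition vertices (T : finType) (K : pred {set T}) : {set T} :=
  [set x | K [set x]%SET]%SET.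

Definition pt (n : nat) := 'I_n -> int.

Definition manhattan (n : nat) (x y : pt n) : int :=
  \sum_(i < n) `|x i - y i|%:Z.

Definition antilex (n : nat) (x y : pt n) : bool :=
  [exists i : 'I_n, (x i < y i) && [forall j : 'I_n, (i < j)%N ==> (x j == y j)]].

(* V_m = {0..m}^n, encoded as the finite type of functions 'I_n -> 'I_m.+1 *)
Definition grid (n m : nat) := {ffun 'I_n -> 'I_m.+1}.

Definition coords (n m : nat) (x : grid n m) : pt n := fun i => (x i : nat)%:Z.

(* x is among the first alpha elements of V_m w.r.t. antilex
   iff fewer than alpha elements of V_m precede it *)
Definition removed (n m alpha : nat) (x : grid n m) : bool :=
  (#|[set y : grid n m | antilex (coords y) (coords x)]%SET| < alpha)%N.

Definition Hset (n m alpha : nat) : {set grid n m} :=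
  [set x | ~~ removed alpha x]%SET.

Definition shift (n m : nat) (delta x : grid n m) : pt n :=
  fun i => coords x i - coords delta i.

Definition diam_le (n m : nat) (delta : grid n m) (r : nat) (s : {set grid n m})
  : bool :=
  [forall x in s, forall y in s,
     manhattan (shift delta x) (shift delta y) <= r%:Z].

(* Gamma_n^{alpha,r}: the link of 0 = delta - delta in VR(Y; r), with the
   vertices of Y labelled by their preimages in H (x <-> x - delta). *)
Definition Gamma (n m alpha r : nat) (delta : grid n m) : pred {set grid n m} :=
  fun s => [&& s \subset @Hset n m alpha, delta \notin s,
               diam_le delta r s & diam_le delta r (delta |: s)%SET].

Definition Wset (n m alpha r : nat) (delta : grid n m) : {set grid n m} :=
  [set x in vertices (Gamma alpha r delta) |
     [forall i : 'I_n, `|shift delta x i|%:Z <= (r %/ 2)%:Z]]%SET.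

Arguments realization R {T} K.

(* Main.v *)
Require Import Defs.
From HB Require Import structures.
From mathcomp Require Import all_boot all_order all_algebra.
From mathcomp Require Import all_classical all_reals all_analysis.
From mathcomp Require Import zify.
Import Order.TTheory GRing.Theory Num.Theory.
Import numFieldTopology.Exports numFieldNormedType.Exports.
Local Open Scope ring_scope.
Set Implicit Arguments. Unset Strict Implicit.

Definition cl (c z : int) : int := if z < - c then - c else if c < z then c else z.

Lemma antilex_trans n (x y z : pt n) : antilex x y -> antilex y z -> antilex x z.
Proof.
case/existsP=> i /andP[lt1 /forallP e1]; case/existsP=> k /andP[lt2 /forallP e2].
apply/existsP; case: (ltngtP i k) => [ik|ki|ik].
- exists k; apply/andP; split.
    by have /implyP/(_ ik)/eqP -> := e1 k.
  apply/forallP=> j; apply/implyP=> kj.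
  have /implyP/(_ (ltn_trans ik kj))/eqP -> := e1 j.
  by have /implyP/(_ kj) := e2 j.
- exists i; apply/andP; split.
    by have /implyP/(_ ki)/eqP <- := e2 i.
  apply/forallP=> j; apply/implyP=> ij.
  have /implyP/(_ ij)/eqP -> := e1 j.
  by have /implyP/(_ (ltn_trans ki ij)) := e2 j.
- have ik' : i = k by apply: val_inj.
  subst k; exists i; apply/andP; split; first exact: lt_trans lt2.
  apply/forallP=> j; apply/implyP=> ij.
  have /implyP/(_ ij)/eqP -> := e1 j.
  by have /implyP/(_ ij) := e2 j.
Qed.

Lemma antilex_irr n (x : pt n) : ~~ antilex x x.
Proof. apply/existsP => -[i /andP[]]; by rewrite ltxx. Qed.

Lemma removed_mono n m alpha (y z : grid n m) :
  removed alpha y -> antilex (coords z) (coords y) -> removed alpha z.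
Proof.
rewrite /removed => ry zy; apply: (leq_ltn_trans _ ry).
apply: subset_leq_card; apply/fintype.subsetP => w; rewrite !inE => wz.
exact: (@antilex_trans _ _ _ _ wz zy).
Qed.

Lemma inH_of_antilex n m alpha (delta z : grid n m) :
  delta \in @Hset n m alpha -> antilex (coords delta) (coords z) -> z \in @Hset n m alpha.
Proof.
rewrite !inE => dH dz; apply/negP => rz.
by move: dH; rewrite (@removed_mono _ _ _ _ _ rz dz).
Qed.

Definition phi n m (c : int) (delta x : grid n m) : grid n m :=
  [ffun i => inord (absz (coords delta i + cl c (Defs.shift delta x i)))].

Lemma shift_phi n m c (delta x : grid n m) i : 0 <= c ->
  Defs.shift delta (phi c delta x) i = cl c (Defs.shift delta x i).
Proof.
move=> c0; have hd := ltn_ord (delta i); have hx := ltn_ord (x i).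
rewrite /Defs.shift /coords /phi ffunE /Defs.shift /coords /cl; repeat case: ifP => ?; rewrite inordK; lia.
Qed.

Lemma shift_self n m (delta : grid n m) i : Defs.shift delta delta i = 0.
Proof. by rewrite /Defs.shift subrr. Qed.

Lemma phi_antilex n m c (delta x : grid n m) : 1 <= c ->
  antilex (coords delta) (coords x) -> antilex (coords delta) (coords (phi c delta x)).
Proof.
move=> c1 /existsP[i /andP[lt1 /forallP e1]]; apply/existsP; exists i; apply/andP; split.
  have := @shift_phi n m c delta x i ltac:(lia); rewrite /Defs.shift /cl.
  move: lt1; repeat case: ifP => ?; lia.
apply/forallP => j; apply/implyP => ij.
have /implyP/(_ ij)/eqP e := e1 j.
have := @shift_phi n m c delta x j ltac:(lia); rewrite /Defs.shift /cl.
move: e; repeat case: ifP => ?; lia.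
Qed.

Lemma phi_id n m c (delta x : grid n m) : 0 <= c ->
  (forall i, `|Defs.shift delta x i| <= c) -> phi c delta x = x.
Proof.
move=> c0 h; apply/ffunP => i; apply: val_inj => /=.
have := @shift_phi n m c delta x i c0; have := h i; rewrite /Defs.shift /cl /coords.
move=> hi; repeat case: ifP => ?; lia.
Qed.
Lemma cl_lip c a b : 0 <= c -> `|cl c a - cl c b| <= `|a - b|.
Proof. rewrite /cl => c0; repeat case: ifP => ?; lia. Qed.

Lemma manh_cl_cl n c (u v : pt n) : 0 <= c ->
  manhattan (fun i => cl c (u i)) (fun i => cl c (v i)) <= manhattan u v.
Proof.
move=> c0; apply: ler_sum => i _.
have := @cl_lip c (u i) (v i) c0; lia.
Qed.

Lemma manh_sym n (u v : pt n) : manhattan u v = manhattan v u.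
Proof. apply: eq_bigr => i _; lia. Qed.

Lemma manh_cl_l n c (r : int) (u v : pt n) : 0 <= c -> r <= 2 * c + 1 ->
  manhattan u (fun _ => 0) <= r -> manhattan v (fun _ => 0) <= r ->
  manhattan u v <= r -> manhattan (fun i => cl c (u i)) v <= r.
Proof.
move=> c0 rc Hu Hv Huv.
case: (pickP (fun i => (`|u i - v i|%N < `|cl c (u i) - v i|%N)%N)) => [i0 Hi0|Hn].
- rewrite /manhattan (bigD1 i0) // in Hu; rewrite /manhattan (bigD1 i0) // in Hv.
  rewrite /manhattan (bigD1 i0) //.
  have h1 : c < (`|u i0 - 0%R|%N)%:Z by move: Hi0; rewrite /cl; repeat case: ifP => ?; lia.
  have h2 : (`|cl c (u i0) - v i0|%N)%:Z <= (`|v i0 - 0%R|%N)%:Z - c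
    by move: Hi0; rewrite /cl; repeat case: ifP => ?; lia.
  have h3 : \sum_(i < n | i != i0) (`|cl c (u i) - v i|%N)%:Z <=
            \sum_(i < n | i != i0) ((`|u i - 0%R|%N)%:Z + (`|v i - 0%R|%N)%:Z).
    apply: ler_sum => i _; rewrite /cl; repeat case: ifP => ?; lia.
  rewrite big_split /= in h3.
  have ar : forall (A S U0 SU V0 SV : int), S <= SU + SV -> U0 + SU <= r -> V0 + SV <= r ->
    c < U0 -> A <= V0 - c -> A + S <= r by move=> *; lia.
  exact: (ar _ _ _ _ _ _ h3 Hu Hv h1 h2).
- apply: le_trans Huv; apply: ler_sum => i _.
  have := Hn i; rewrite /= => /negbT; lia.
Qed.
Lemma cont_fst (R : realType) (N : nat) : continuous (fun x : R * 'rV[R]_N => x.1).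
Proof. move=> x; exact: cvg_fst. Qed.
Lemma cont_snd (R : realType) (N : nat) : continuous (fun x : R * 'rV[R]_N => x.2).
Proof. move=> x; exact: cvg_snd. Qed.

Lemma cont_sum (R : realType) (T : topologicalType) (N : nat) (I : Type) (r : seq I)
  (g : I -> T -> 'rV[R]_N) : (forall i, continuous (g i)) ->
  continuous (fun x => \sum_(i <- r) g i x).
Proof.
move=> hg; elim: r => [|a r IH].
  under eq_fun do rewrite big_nil. exact: cst_continuous.
under eq_fun do rewrite big_cons.
move=> x.
have := @continuousD R 'rV[R]_N T (g a) (fun x => \sum_(i <- r) g i x) x (hg a x) (IH x).
done.
Qed.

Lemma cont_mulmx (R : realType) (N : nat) (M : 'M[R]_N) :
  continuous (fun p : 'rV[R]_N => p *m M).
Proof.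
have -> : (fun p : 'rV[R]_N => p *m M) = (fun p => \sum_i p 0 i *: row i M).
  by apply: funext => p; rewrite mulmx_sum_row.
apply: cont_sum => i y; apply: (@continuousZ R _ _ (fun p : 'rV[R]_N => p 0 i) (fun=> row i M)); last exact: cst_continuous.
exact: coord_continuous.
Qed.

Lemma cont_H (R : realType) (N : nat) (M : 'M[R]_N) :
  continuous (fun x : R * 'rV[R]_N => (1 - x.1) *: (x.2 *m M) + x.1 *: x.2).
Proof.
move=> x.
apply: (@continuousD R 'rV[R]_N _ (fun x : R * 'rV[R]_N => (1 - x.1) *: (x.2 *m M)) (fun x : R * 'rV[R]_N => x.1 *: x.2)).
- apply: (@continuousZ R 'rV[R]_N _ (fun x : R * 'rV[R]_N => 1 - x.1) (fun x : R * 'rV[R]_N => x.2 *m M)).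
 + apply: continuousB; [exact: cst_continuous| exact: cont_fst].
 + exact: (@continuous_comp _ _ _ (fun x : R * 'rV[R]_N => x.2) (fun p => p *m M) x (@cont_snd R N x) (@cont_mulmx R N M _)).
- apply: (@continuousZ R 'rV[R]_N _ (fun x : R * 'rV[R]_N => x.1) (fun x : R * 'rV[R]_N => x.2)). exact: cont_fst.
 exact: cont_snd.
Qed.

Lemma manh_ext n (u u' v v' : pt n) : (forall i, u i = u' i) -> (forall i, v i = v' i) ->
  manhattan u v = manhattan u' v'.
Proof. by move=> hu hv; apply: eq_bigr => i _; rewrite hu hv. Qed.

Lemma diam_mono n m (delta : grid n m) r (s s' : {set grid n m}) :
  s \subset s' -> diam_le delta r s' -> diam_le delta r s.
Proof.
move=> ss /forall_inP h; apply/forall_inP => x xs; apply/forall_inP => y ys.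
have /forall_inP := h x (fintype.subsetP ss x xs); apply.
exact: (fintype.subsetP ss).
Qed.

Lemma Gamma_down n m alpha r (delta : grid n m) (s s' : {set grid n m}) :
  Gamma alpha r delta s' -> s \subset s' -> Gamma alpha r delta s.
Proof.
rewrite /Gamma; case/and4P => sH dn d1 d2 ss; apply/and4P; split.
- exact: (fintype.subset_trans ss sH).
- apply/negP => ds; move/negP: dn; apply; exact: (fintype.subsetP ss).
- exact: diam_mono d1.
- apply: diam_mono d2; exact: finset.setUS.
Qed.

Lemma Gamma_ext n m alpha r (delta : grid n m) (s : {set grid n m}) :
  (2 <= r)%N -> delta \in @Hset n m alpha ->
  (forall y, y \in @Hset n m alpha -> y != delta -> antilex (coords delta) (coords y)) ->
  Gamma alpha r delta s ->
  Gamma alpha r delta (s :|: [set phi (r %/ 2)%:Z delta x | x in s]).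
Proof.
move=> hr dH hd Ks.
set c := (r %/ 2)%:Z.
have c1 : 1 <= c by rewrite /c; lia.
have c0 : 0 <= c by rewrite /c; lia.
have rc : r%:Z <= 2 * c + 1 by rewrite /c; lia.
move: (Ks); rewrite /Gamma => /and4P [sH dn d1 d2].
have phiH : forall x, x \in s -> antilex (coords delta) (coords (phi c delta x)).
  move=> x xs; apply: phi_antilex => //; apply: hd; first exact: (fintype.subsetP sH).
  by apply/eqP => e; subst x; rewrite xs in dn.
have rep : forall w, w \in delta |: (s :|: [set phi c delta x | x in s]) ->
    exists2 b, b \in delta |: s & ((forall i, Defs.shift delta w i = Defs.shift delta b i) \/
                                    (forall i, Defs.shift delta w i = cl c (Defs.shift delta b i))).
  move=> w; rewrite !inE => /orP[/eqP ->| /orP[ws | /imsetP[x xs ->]]].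
  - by exists delta; [rewrite !inE eqxx | left].
  - by exists w; [rewrite !inE ws orbT | left].
  - by exists x; [rewrite !inE xs orbT | right => i; exact: shift_phi].
have bound : forall b1 b2, b1 \in delta |: s -> b2 \in delta |: s ->
    manhattan (Defs.shift delta b1) (Defs.shift delta b2) <= r%:Z.
  move=> b1 b2 h1 h2; have /forall_inP := d2.
  by move=> /(_ b1 h1) /forall_inP /(_ b2 h2).
have norm : forall b, b \in delta |: s -> manhattan (Defs.shift delta b) (fun _ => 0) <= r%:Z.
  move=> b hb; rewrite -(@manh_ext _ (Defs.shift delta b) _ (Defs.shift delta delta)) //.
    by apply: bound => //; rewrite !inE eqxx.
  by move=> i; rewrite shift_self.
have D : diam_le delta r (delta |: (s :|: [set phi c delta x | x in s])).
  apply/forall_inP => w1 h1; apply/forall_inP => w2 h2.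
  have [b1 hb1 e1] := rep w1 h1; have [b2 hb2 e2] := rep w2 h2.
  have Hd := bound b1 b2 hb1 hb2; have Hu := norm b1 hb1; have Hv := norm b2 hb2.
  case: e1 => e1; case: e2 => e2; rewrite (manh_ext e1 e2).
  - exact: Hd.
  - rewrite manh_sym; apply: manh_cl_l => //; by rewrite manh_sym.
  - exact: manh_cl_l.
  - by apply: (le_trans _ Hd); apply: manh_cl_cl.
rewrite /Gamma; apply/and4P; split => //.
- apply/fintype.subsetP => w /finset.setUP[ws | /imsetP[x xs ->]].
    exact: (fintype.subsetP sH).
  exact: inH_of_antilex dH (phiH x xs).
- rewrite !inE negb_or; apply/andP; split=> //; apply/imsetP => -[x xs e].
  by have := phiH x xs; rewrite -e (negbTE (antilex_irr _)).
- apply: diam_mono D; exact: finset.subsetUr.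
Qed.
Definition Mx (R : realType) (T : finType) (f : T -> T) : 'M[R]_#|T| :=
  \matrix_(i, j) (f (enum_val i) == enum_val j)%:R.

Definition supp (R : realType) (T : finType) (p : 'rV[R]_#|T|) : {set T} :=
  [set x | p ord0 (enum_rank x) != 0].

Lemma pM_ge0 (R : realType) (T : finType) (f : T -> T) (p : 'rV[R]_#|T|) :
  (forall i, 0 <= p ord0 i) -> forall j, 0 <= (p *m Mx R f) ord0 j.
Proof.
move=> h j; rewrite !mxE; apply: sumr_ge0 => i _; rewrite mxE.
by apply: mulr_ge0 => //; rewrite ler0n.
Qed.

Lemma pM_sum (R : realType) (T : finType) (f : T -> T) (p : 'rV[R]_#|T|) :
  \sum_j (p *m Mx R f) ord0 j = \sum_i p ord0 i.
Proof.
under eq_bigr do rewrite !mxE.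
rewrite exchange_big /=; apply: eq_bigr => i _.
rewrite (bigD1 (enum_rank (f (enum_val i)))) //= big1 ?addr0.
  by rewrite mxE enum_rankK eqxx mulr1.
move=> j hj; rewrite mxE; case: eqP => [e|_]; last by rewrite mulr0.
by move: hj; rewrite e enum_valK eqxx.
Qed.

Lemma supp_pM (R : realType) (T : finType) (f : T -> T) (p : 'rV[R]_#|T|) :
  supp (p *m Mx R f) \subset [set f x | x in supp p].
Proof.
apply/fintype.subsetP => x; rewrite inE mxE.
case: (pickP (fun i => (p ord0 i != 0) && (f (enum_val i) == x))) => [i /andP[pi /eqP ei] _| none].
  apply/imsetP; exists (enum_val i) => //; by rewrite inE enum_valK.
rewrite big1 ?eqxx // => i _; rewrite mxE.
have := none i; rewrite enum_rankK /=; case: (p ord0 i =P 0) => [-> _|_ /= ->].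
  by rewrite mul0r.
by rewrite mulr0.
Qed.

Lemma pM_id (R : realType) (T : finType) (f : T -> T) (p : 'rV[R]_#|T|) :
  (forall x, x \in supp p -> f x = x) -> p *m Mx R f = p.
Proof.
move=> h; apply/rowP => j; rewrite !mxE (bigD1 j) //= big1 ?addr0.
  rewrite mxE; case: (p ord0 j =P 0) => [-> |/eqP pj]; first by rewrite mul0r.
  by rewrite h ?eqxx ?mulr1 // inE enum_valK.
move=> i ij; rewrite mxE; case: (p ord0 i =P 0) => [-> |/eqP pi]; first by rewrite mul0r.
rewrite h ?inE ?enum_valK //; case: eqP => [/enum_val_inj e|_]; last by rewrite mulr0.
by rewrite e eqxx in ij.
Qed.

Lemma supp_comb (R : realType) (T : finType) (t : R) (p q : 'rV[R]_#|T|) :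
  supp ((1 - t) *: q + t *: p) \subset supp q :|: supp p.
Proof.
apply/fintype.subsetP => x; rewrite !inE !mxE.
case: (q ord0 (enum_rank x) =P 0) => [-> | //]; case: (p ord0 (enum_rank x) =P 0) => [-> | //].
by rewrite !mulr0 addr0 eqxx.
Qed.

Theorem lemma3p3 (R : realType) (n m r alpha : nat) (delta : grid n m) :
  (2 <= n)%N -> (1 <= m)%N -> (2 <= r)%N ->
  (1 <= alpha)%N -> (alpha < m.+1 ^ n)%N ->
  (* delta is the antilex-least element of H *)
  delta \in @Hset n m alpha ->
  (forall y, y \in @Hset n m alpha -> y != delta -> antilex (coords delta) (coords y)) ->
  homotopy_equivalent R
    (realization R (Gamma alpha r delta))
    (realization R (induced_subcomplex (Gamma alpha r delta) (Wset alpha r delta))).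
Proof.
move=> hn hm hr ha1 ha2 dH hd.
set K := Gamma alpha r delta.
set W := Wset alpha r delta.
set c := (r %/ 2)%:Z.
have c0 : 0 <= c by rewrite /c; lia.
set f := phi c delta.
set M := Mx R f.
have Kext : forall s, K s -> K (s :|: [set f x | x in s]).
  by move=> s Ks; apply: Gamma_ext.
have fW : forall s x, K s -> x \in s -> f x \in W.
  move=> s x Ks xs; rewrite /W /Wset inE; apply/andP; split.
    rewrite /vertices inE; apply: (Gamma_down (Kext s Ks)).
    apply/fintype.subsetP => y; rewrite inE => /eqP ->; apply/finset.setUP; right.
    exact: imset_f.
  apply/forallP => i; rewrite /f shift_phi // /cl; repeat case: ifP => ?; rewrite /c; lia.
have AB : forall p, realization R K p -> realization R (induced_subcomplex K W) (p *m M).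
  move=> p [p0 [p1 Kp]]; split; first exact: pM_ge0.
  split; first by rewrite pM_sum.
  rewrite /induced_subcomplex; apply/andP; split.
    apply: (Gamma_down (Kext _ Kp)).
    apply: (fintype.subset_trans (supp_pM f p)); exact: finset.subsetUr.
  apply/fintype.subsetP => x /(fintype.subsetP (supp_pM f p)) /imsetP [y ys ->].
  exact: fW Kp ys.
have BA : forall p, realization R (induced_subcomplex K W) p -> realization R K p.
  by move=> p [p0 [p1 /andP [Kp _]]].
have Bfix : forall p, realization R (induced_subcomplex K W) p -> p *m M = p.
  move=> p [_ [_ /andP [_ sW]]]; apply: pM_id => x xs.
  have := fintype.subsetP sW x xs; rewrite /W /Wset inE => /andP [_ /forallP h].
  by apply: phi_id => // i; have := h i; lia.
have E0 : forall x : 'rV[R]_#|grid n m|,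
    (1 - (0:R)) *: (x *m M) + (0:R) *: x = x *m M.
  by move=> x; rewrite subr0 scale1r scale0r addr0.
have E1 : forall x : 'rV[R]_#|grid n m|,
    (1 - (1:R)) *: (x *m M) + (1:R) *: x = x.
  by move=> x; rewrite subrr scale0r add0r scale1r.
exists (fun p => p *m M), id; split; [|split; [|split; [|split; [|split]]]].
- apply: continuous_subspaceT; exact: cont_mulmx.
- by apply: continuous_subspaceT => x; exact: cvg_id.
- by move=> y [p Ap <-]; exact: AB.
- by move=> y [p Bp <-]; exact: BA.
- exists (fun x : R * 'rV[R]_#|grid n m| => (1 - x.1) *: (x.2 *m M) + x.1 *: x.2).
  split. apply: continuous_subspaceT. exact: cont_H.
  split; first by move=> x Ax; rewrite /= E0 E1.
  move=> y [[t p] [/= ht Ap] <-] /=.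
  move: ht; rewrite /= in_itv /= => /andP [t0 t1].
  case: Ap => p0 [p1 Kp].
  have E : forall j, ((1 - t) *: (p *m M) + t *: p) ord0 j
                     = (1 - t) * (p *m M) ord0 j + t * p ord0 j.
    by move=> j; rewrite !mxE.
  split; [|split].
  + move=> i; rewrite E; apply: addr_ge0; apply: mulr_ge0 => //.
      by rewrite subr_ge0.
    exact: pM_ge0.
  + under eq_bigr do rewrite E.
    by rewrite big_split /= -!mulr_sumr pM_sum p1 !mulr1 subrK.
  + apply: (Gamma_down (Kext _ Kp)).
    apply: (fintype.subset_trans (supp_comb t p (p *m M))).
    rewrite finset.setUC; exact: finset.setUS (supp_pM f p).
- exists (fun x : R * 'rV[R]_#|grid n m| => (1 - x.1) *: (x.2 *m M) + x.1 *: x.2).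
  split. apply: continuous_subspaceT. exact: cont_H.
  split; first by move=> x Ax; rewrite /= E0 E1.
  move=> y [[t p] [/= ht Bp] <-] /=.
  by rewrite (Bfix p Bp) -scalerDl subrK scale1r.
Qed.
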